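(* Let $\Gamma$ be a group and let $A$ be a set. Then the map $\Psi \colon \mathcal{N}(\Gamma) \to \mathcal{P}(A^\Gamma)$ defined by $\Psi(N) = \mathrm{Fix}(N)$ is uniformly continuous. Moreover, if $A$ contains at least two elements, then $\Psi$ is a uniform embedding.
   Context: $\mathcal{N}(\Gamma)$ is the set of normal subgroups of $\Gamma$, with the uniform structure induced from the prodiscrete uniform structure on $\mathcal{P}(\Gamma) = \{0,1\}^\Gamma$ (a base of entourages is $\{(N_1,N_2) : N_1 \cap F = N_2 \cap F\}$, $F \subset \Gamma$ finite). $A^\Gamma$ carries the prodiscrete uniform structure and the shift $(\gamma x)(\alpha) = x(\gamma^{-1}\alpha)$, and $\mathrm{Fix}(N) = \{x \in A^\Gamma : \gamma x = x \ \forall \gamma \in N\}$. $\mathcal{P}(A^\Gamma)$ carries the Hausdorff-Bourbaki uniform structure, which has as a base the sets $\widehat{V} = \{(B,C) : C \subset V[B] \text{ and } B \subset V[C]\}$, $V$ an entourage of $A^\Gamma$, where $V[B] = \{x : (x,b) \in V \text{ for some } b \in B\}$. A uniform embedding is an injective map inducing a uniform isomorphism onto its image. *)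

(* Defs.v *)
From HB Require Import structures.
From mathcomp Require Import all_boot monoid.
From mathcomp Require Import boolp classical_sets cardinality.

Set Implicit Arguments.
Unset Strict Implicit.
Unset Printing Implicit Defensive.

Local Open Scope classical_set_scope.
Local Open Scope group_scope.

Section Defs.
Variable G : groupType.

Definition normal_subgroup (N : set G) : Prop :=
  [/\ N 1,
      (forall x y, N x -> N y -> N (x * y)),
      (forall x, N x -> N (x^-1)) &
      (forall g n, N n -> N (g^-1 * n * g))].

(* Prodiscrete uniform structure on P(Γ) = {0,1}^Γ, induced on N(Γ):
   basic entourages {(N1,N2) : N1 ∩ F = N2 ∩ F}, F finite. *)
Definition subsets_basic_ent (F : set G) : set (set G * set G) :=
  [set NN | NN.1 `&` F = NN.2 `&` F].

Definition subsets_entourage (U : set (set G * set G)) : Prop :=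
  exists F : set G, finite_set F /\ subsets_basic_ent F `<=` U.

Variable A : Type.

Definition shift (g : G) (x : G -> A) : G -> A := fun a => x (g^-1 * a).

Definition Fix (N : set G) : set (G -> A) :=
  [set x | forall g, N g -> shift g x = x].

Definition conf_basic_ent (F : set G) : set ((G -> A) * (G -> A)) :=
  [set xy | forall g, F g -> xy.1 g = xy.2 g].

Definition conf_entourage (V : set ((G -> A) * (G -> A))) : Prop :=
  exists F : set G, finite_set F /\ conf_basic_ent F `<=` V.

Definition ent_image (V : set ((G -> A) * (G -> A))) (B : set (G -> A))
  : set (G -> A) := [set x | exists2 b, B b & V (x, b)].

Definition hb_hat (V : set ((G -> A) * (G -> A)))
  : set (set (G -> A) * set (G -> A)) :=
  [set BC | BC.2 `<=` ent_image V BC.1 /\ BC.1 `<=` ent_image V BC.2].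

Definition hb_entourage (W : set (set (G -> A) * set (G -> A))) : Prop :=
  exists V, conf_entourage V /\ hb_hat V `<=` W.

Definition Psi_unif_continuous : Prop :=
  forall W, hb_entourage W ->
  exists U, subsets_entourage U /\
    forall N1 N2, normal_subgroup N1 -> normal_subgroup N2 ->
      U (N1, N2) -> W (Fix N1, Fix N2).

Definition Psi_unif_embedding : Prop :=
  (forall N1 N2, normal_subgroup N1 -> normal_subgroup N2 ->
     Fix N1 = Fix N2 -> N1 = N2) /\
  Psi_unif_continuous /\
  (forall U, subsets_entourage U ->
   exists W, hb_entourage W /\
     forall N1 N2, normal_subgroup N1 -> normal_subgroup N2 ->
       W (Fix N1, Fix N2) -> U (N1, N2)).

End Defs.

(* Main.v *)
Require Import Defs.
From mathcomp Require Import all_boot monoid.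
From mathcomp Require Import boolp classical_sets cardinality.

Set Implicit Arguments.
Unset Strict Implicit.
Unset Printing Implicit Defensive.
Local Open Scope classical_set_scope.
Local Open Scope group_scope.

Section Proofs.
Variables (G : groupType) (A : Type).

Lemma fix_mul (N : set G) (x : G -> A) n a :
  normal_subgroup N -> @Fix _ A N x -> N n -> x (n * a) = x a.
Proof.
move=> [N1 NM NV NC] Hx Nn.
have := congr1 (fun f => f a) (Hx _ (NV _ Nn)).
by rewrite /shift /= invgK.
Qed.

Definition diffs (F : set G) : set G :=
  (fun p => p.1 * p.2^-1) @` (F `*` F).

Lemma diffs_finite F : finite_set F -> finite_set (diffs F).
Proof. by move=> fF; apply: finite_image; apply: finite_setX. Qed.

Lemma extend (Nx Ny : set G) (F : set G) (x : G -> A) :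
  normal_subgroup Nx -> normal_subgroup Ny ->
  (forall g, Ny g -> diffs F g -> Nx g) -> @Fix _ A Nx x ->
  exists2 y, @Fix _ A Ny y & forall g, F g -> x g = y g.
Proof.
move=> HNx HNy Hsub Hx.
case: (HNy) => Ny1 NyM NyV NyC.
pose P g := exists f, F f /\ Ny (g * f^-1).
pose y g := match pselect (P g) with
            | left h => x (proj1_sig (cid h)) | right _ => x 1 end.
have key : forall f1 f2, F f1 -> F f2 -> Ny (f1 * f2^-1) -> x f1 = x f2.
  move=> f1 f2 F1 F2 Nf.
  have D : diffs F (f1 * f2^-1) by exists (f1, f2).
  have := fix_mul f2 HNx Hx (Hsub _ Nf D).
  by rewrite -mulgA mulVg mulg1.
have same : forall a b f1 f2, F f1 -> F f2 -> Ny (a * f1^-1) -> Ny (b * f2^-1) ->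
    Ny (a * b^-1) -> x f1 = x f2.
  move=> a b f1 f2 F1 F2 N1 N2 Nab; apply: key => //.
  have -> : f1 * f2^-1 = (a * f1^-1)^-1 * ((a * b^-1) * (b * f2^-1)).
    by rewrite invgM invgK !mulgA !mulgVK.
  by apply: (NyM); [apply: (NyV)|apply: (NyM)].
exists y.
  move=> n Nn; apply: funext => a; rewrite /shift /y.
  have Nab : Ny (n^-1 * a * a^-1) by rewrite mulgK; apply: (NyV).
  case: pselect => [h1|h1]; case: pselect => [h2|h2] //.
  - case: (cid h1) => f1 [F1 N1]; case: (cid h2) => f2 [F2 N2] /=.
    exact: (same _ _ _ _ F1 F2 N1 N2 Nab).
  - exfalso; apply: h2; case: h1 => f [Ff Nf]; exists f; split => //.
    have -> : a * f^-1 = n * (n^-1 * a * f^-1) by rewrite -!mulgA mulVKg.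
    exact: NyM.
  - exfalso; apply: h1; case: h2 => f [Ff Nf]; exists f; split => //.
    rewrite -mulgA; apply: (NyM) => //; exact: NyV.
move=> g Fg; rewrite /y; case: pselect => [h|h].
  case: (cid h) => f [Ff Nf] /=; exact: key.
exfalso; apply: h; exists g; split => //; rewrite mulgV //.
Qed.

Lemma unif_cont : Psi_unif_continuous G A.
Proof.
move=> W [V [[F [fF FV]] VW]].
exists (subsets_basic_ent (diffs F)); split.
  by exists (diffs F); split => //; apply: diffs_finite.
move=> N1 N2 HN1 HN2 /= E; apply: VW.
have S12 : forall g, N1 g -> diffs F g -> N2 g.
  move=> g N1g Dg; have : (N1 `&` diffs F) g by [].
  by rewrite E => -[].
have S21 : forall g, N2 g -> diffs F g -> N1 g.
  move=> g N2g Dg; have : (N2 `&` diffs F) g by [].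
  by rewrite -E => -[].
split => x Hx.
- have [y Hy Hxy] := extend HN2 HN1 S12 Hx.
  exists y => //; apply: FV => g Fg /=; exact: Hxy.
- have [y Hy Hxy] := extend HN1 HN2 S21 Hx.
  exists y => //; apply: FV => g Fg /=; exact: Hxy.
Qed.

Section Two.
Variables (a b : A).
Hypothesis ab : a <> b.

Definition ind (N : set G) : G -> A := fun g => if pselect (N g) then a else b.

Lemma ind_fix N : normal_subgroup N -> @Fix _ A N (ind N).
Proof.
move=> [N1 NM NV NC] n Nn; apply: funext => g; rewrite /shift /ind.
case: pselect => h1; case: pselect => h2 //; exfalso.
- apply: h2; have -> : g = n * (n^-1 * g) by rewrite mulVKg.
  exact: NM.
- by apply: h1; apply: (NM) => //; apply: (NV).
Qed.

Lemma ind_in N (y : G -> A) M g : normal_subgroup N -> normal_subgroup M ->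
  @Fix _ A M y -> ind N 1 = y 1 -> ind N g = y g -> M g -> N g.
Proof.
move=> HN HM Hy E1 Eg Mg.
have := fix_mul 1 HM Hy Mg; rewrite mulg1 -Eg -E1 /ind.
have [N1 _ _ _] := HN.
destruct (pselect (N g)) as [hg|hg] => //; destruct (pselect (N 1)) as [h1|h1] => //.
by move=> /esym.
Qed.

End Two.

End Proofs.

Theorem theorem6p3 (G : groupType) (A : Type) :
  Psi_unif_continuous G A /\
  ((exists a b : A, a <> b) -> Psi_unif_embedding G A).
Proof.
split; first exact: unif_cont.
move=> [a0 [b0 ab]]; split; [|split; first exact: unif_cont].
- move=> N1 N2 HN1 HN2 E.
  have H : forall N M : set G, normal_subgroup N -> normal_subgroup M ->
      @Fix _ A N = @Fix _ A M -> forall g, M g -> N g.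
    move=> N M HN HM EF g Mg.
    have Hx : @Fix _ A M (ind a0 b0 N) by rewrite -EF; exact: ind_fix.
    exact: (ind_in ab HN HM Hx).
  by apply/seteqP; split => g; apply: H.
- move=> U [F [fF FU]].
  pose F' := F `|` [set 1 : G].
  exists (hb_hat (@conf_basic_ent _ A F')); split.
    exists (@conf_basic_ent _ A F'); split => //; exists F'; split => //.
    by rewrite /F' finite_setU; split => //; apply: finite_set1.
  move=> N1 N2 HN1 HN2 [S1 S2]; apply: FU => /=.
  have H : forall N M : set G, normal_subgroup N -> normal_subgroup M ->
      @Fix _ A M `<=` ent_image (@conf_basic_ent _ A F') (@Fix _ A N) ->
      forall g, F g -> N g -> M g.
    move=> N M HN HM S g Fg Ng.
    have [y Hy Hxy] := S _ (ind_fix a0 b0 HM).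
    apply: (ind_in ab HM HN Hy).
    + apply: Hxy; by right.
    + apply: Hxy; by left.
    + exact: Ng.
  by apply/seteqP; split => g [Ng Fg]; split => //;
    [apply: (H N1) => // | apply: (H N2) => //].
Qed.
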